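(* Let $C$ be an $m\times n$ maximal configuration resistant to predators, with $m\ge 2$. If row $m-1$ (the penultimate row) contains exactly $r$ occupied lots, then every row $i$ with $1\le i\le m-2$ contains at most $r+1$ occupied lots.
   Context: An $m\times n$ configuration is a $0$-$1$ matrix $C=(C_{i,j})$, $1\le i\le m$, $1\le j\le n$; $C_{i,j}=1$ means lot $(i,j)$ is occupied by a house. Row $1$ is the northernmost and row $m$ the southernmost; column $1$ is westernmost and column $n$ easternmost. A house at $(i,j)$ is blocked from sunlight if the three lots $(i,j-1)$, $(i,j+1)$, $(i+1,j)$ all lie inside the grid and are all occupied (lots outside the grid never obstruct sunlight). $C$ is permissible if no house is blocked, and maximal if it is permissible and setting any single empty lot to $1$ yields a non-permissible configuration. A maximal configuration is resistant to predators if, for every empty lot, putting a house on it (alone) results in that new house being blocked. *)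

(* Defs.v *)
From mathcomp Require Import all_boot.
Set Implicit Arguments. Unset Strict Implicit. Unset Printing Implicit Defensive.

(* An m x n configuration is represented by C : nat -> nat -> bool, using
   1-based indices: lot (i,j) with 1 <= i <= m, 1 <= j <= n; C i j = true
   means occupied. Values of C outside the grid are irrelevant (never used). *)
Definition config := nat -> nat -> bool.

Definition in_grid (m n i j : nat) : bool := (1 <= i <= m) && (1 <= j <= n).

Definition blocked (m n : nat) (C : config) (i j : nat) : bool :=
  [&& in_grid m n i j.-1, 1 < j, in_grid m n i j.+1, in_grid m n i.+1 j,
      C i j.-1, C i j.+1 & C i.+1 j].

Definition permissible (m n : nat) (C : config) : Prop :=
  forall i j, in_grid m n i j -> C i j -> ~~ blocked m n C i j.

Definition add_house (C : config) (a b : nat) : config :=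
  fun i j => if (i == a) && (j == b) then true else C i j.

Definition maximal (m n : nat) (C : config) : Prop :=
  permissible m n C /\
  forall a b, in_grid m n a b -> ~~ C a b -> ~ permissible m n (add_house C a b).

Definition resistant (m n : nat) (C : config) : Prop :=
  maximal m n C /\
  forall a b, in_grid m n a b -> ~~ C a b -> blocked m n (add_house C a b) a b.

Definition row_count (n : nat) (C : config) (i : nat) : nat :=
  \sum_(1 <= j < n.+1) C i j.

(* Main.v *)
Require Import Defs.
From mathcomp Require Import all_boot.
From mathcomp Require Import zify.

Section Aux.
Variable n : nat.
Local Notation N := n.+3.

Definition Lw (x : nat -> bool) := \sum_(0 <= j < N) ((3 <= j <= n) && ~~ x j : nat).
Definition Rw (x : nat -> bool) := \sum_(0 <= j < N) ((0 < j) && (j.+2 <= n) && ~~ x j : nat).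
Definition Ew (x : nat -> bool) := \sum_(0 <= j < N) ((0 < j <= n) && ~~ x j : nat).
Definition Pw (x : nat -> bool) := \sum_(0 <= j < N) ((0 < j <= n) && x j : nat).

Lemma sum_shift K (F : nat -> nat) : F 0 = 0 ->
  \sum_(0 <= j < K.+1) F j = \sum_(0 <= j < K) F j.+1.
Proof. by move=> H; rewrite big_nat_recl // H add0n. Qed.

Lemma sum_mono K (F : nat -> nat) :
  \sum_(0 <= j < K) F j <= \sum_(0 <= j < K.+1) F j.
Proof. by rewrite big_nat_recr //= leq_addr. Qed.

Lemma sum_trim K (F : nat -> nat) : F K = 0 ->
  \sum_(0 <= j < K.+1) F j = \sum_(0 <= j < K) F j.
Proof. by move=> H; rewrite big_nat_recr //= H addn0. Qed.

Variables a b : nat -> bool.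
Hypothesis H1 : forall j, 0 < j <= n -> ~~ a j -> b j.
Hypothesis Hb : forall j, 0 < j <= n -> ~~ b j -> [/\ 1 < j, j < n, b j.-1 & b j.+1].
Hypothesis Hbl : forall j, 1 < j -> j < n -> a j.-1 -> a j -> a j.+1 -> ~~ b j.

Lemma LR : Lw b <= Rw a.
Proof.
rewrite /Lw /Rw.
set X := fun q => ((0 < q) && (q.+2 <= n) && ~~ a q && ~~ b q.+1 : nat).
set Y := fun q => ((0 < q) && (q.+2 <= n) && ~~ a q && a q.+1 && ~~ b q.+2 : nat).
apply: (leq_trans (sum_mono _ _)); apply: (leq_trans (sum_mono _ _)).
rewrite sum_shift // sum_shift //.
apply: (@leq_trans (\sum_(0 <= j < N) (X j.+1 + Y j))).
  apply: leq_sum => p _.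
  case Ep: (3 <= p.+2 <= n); last by [].
  case Eb: (b p.+2) => //=.
  have [h1 h2 h3 h4] := @Hb (p.+2) ltac:(lia) ltac:(by rewrite Eb).
  have Ea : a p.+2 by apply/negPn/negP => /(@H1 (p.+2) ltac:(lia)); rewrite Eb.
  rewrite /X /Y Eb /=.
  case Ea1: (a p.+1); case Ea0: (a p) => /=; try lia.
  have := @Hbl (p.+1) ltac:(lia) ltac:(lia) ltac:(by rewrite Ea0) ltac:(by rewrite Ea1) Ea.
  by rewrite /= h3.
rewrite big_split /=.
rewrite -sum_shift; last by rewrite /X.
rewrite sum_trim; last by rewrite /X; apply/eqP; rewrite eqb0; apply/negP; lia.
rewrite -big_split /=; apply: leq_sum => q _.
rewrite /X /Y.
case Eq: ((0 < q) && (q.+2 <= n)); last by [].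
case Eaq: (a q); first by [].
case Eb1: (b q.+1); case Eb2: (b q.+2); rewrite /=; try lia.
have [_ _ _ h] := @Hb (q.+1) ltac:(lia) ltac:(by rewrite Eb1).
by rewrite Eb2 in h.
Qed.

Lemma RL : Rw b <= Lw a.
Proof.
rewrite /Lw /Rw.
set X := fun p => ((3 <= p <= n) && ~~ a p && ~~ b p.-1 : nat).
set Y := fun p => ((3 <= p <= n) && ~~ a p && a p.-1 && ~~ b p.-2 : nat).
apply: (@leq_trans (\sum_(0 <= j < N) (X j.+1 + Y j.+2))).
  apply: leq_sum => p _.
  case Ep: ((0 < p) && (p.+2 <= n)); last by [].
  case Eb: (b p) => //=.
  have [h1 h2 h3 h4] := @Hb (p) ltac:(lia) ltac:(by rewrite Eb).
  have Ea : a p by apply/negPn/negP => /(@H1 (p) ltac:(lia)); rewrite Eb.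
  rewrite /X /Y /= Eb /=.
  case Ea1: (a p.+1); case Ea2: (a p.+2) => /=; try lia.
  have := @Hbl (p.+1) ltac:(lia) ltac:(lia) Ea ltac:(by rewrite Ea1) ltac:(by rewrite Ea2).
  by rewrite /= h4.
rewrite big_split /=.
rewrite -sum_shift; last by rewrite /X.
rewrite -(sum_shift _ (fun j => Y j.+1)); last by rewrite /Y.
rewrite -sum_shift; last by rewrite /Y.
rewrite sum_trim; last by rewrite /Y; apply/eqP; rewrite eqb0; apply/negP; lia.
rewrite (sum_trim (n.+4) Y); last by rewrite /Y; apply/eqP; rewrite eqb0; apply/negP; lia.
rewrite (sum_trim N Y); last by rewrite /Y; apply/eqP; rewrite eqb0; apply/negP; lia.
rewrite -big_split /=; apply: leq_sum => q _.
rewrite /X /Y.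
case Eq: (3 <= q <= n); last by [].
case Eaq: (a q); first by [].
case Eb1: (b q.-1); case Eb2: (b q.-2); rewrite /=; try lia.
have [_ _ _ h] := @Hb (q.-2) ltac:(lia) ltac:(by rewrite Eb2).
have e : (q.-2).+1 = q.-1 by lia.
by rewrite e Eb1 in h.
Qed.

End Aux.

Lemma sum_eq1 K c : \sum_(0 <= j < K) (j == c : nat) = (c < K).
Proof.
elim: K => [|K IH]; first by rewrite big_geq.
rewrite big_nat_recr //= IH.
case: (ltngtP c K) => h.
- by rewrite ltnS ltnW.
- by rewrite ltnS leqNgt h.
- by rewrite h ltnS leqnn.
Qed.

Lemma Pw_row n (C : config) k : Pw n (C k) = row_count n C k.
Proof.
rewrite /Pw /row_count (big_cat_nat _ (n:=1)) // (big_cat_nat _ (n:=n.+1) (p:=n.+3)) // ; last by rewrite ltnS ltnW.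
rewrite big_nat1 /= add0n.
rewrite (_ : \sum_(n.+1 <= j < n.+3) _ = 0); last first.
  rewrite big_nat_cond big1 // => i /andP[/andP[h1 h2] _].
  by rewrite (_ : (0 < i <= n) = false) //; apply/negbTE; lia.
rewrite addn0; apply: eq_big_nat => i /andP[h1 h2].
  by rewrite h1 /= -ltnS h2.
Qed.

Lemma PE n (x : nat -> bool) : Pw n x + Ew n x = \sum_(0 <= j < n.+3) (0 < j <= n : nat).
Proof.
rewrite /Pw /Ew -big_split /=; apply: eq_big_nat => i _.
by case: (0 < i <= n); case: (x i).
Qed.

Lemma QE n (x : nat -> bool) : Lw n x + Rw n x <= Ew n x + Ew n x.
Proof.
rewrite /Lw /Rw /Ew -!big_split /=; apply: leq_sum => j _.
case: (x j) => /=; rewrite ?andbF //.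
rewrite !andbT.
case h1: (2 < j <= n); case h2: ((0 < j) && (j.+2 <= n)); case h3: (0 < j <= n) => //=; lia.
Qed.

Lemma EQ n (x : nat -> bool) : x 1 -> x n ->
  Ew n x + Ew n x <= Lw n x + Rw n x + 2.
Proof.
move=> x1 xn.
apply: (@leq_trans (Lw n x + Rw n x + (\sum_(0 <= j < n.+3) (j == 2 : nat) + \sum_(0 <= j < n.+3) (j == n.-1 : nat)))).
  rewrite /Lw /Rw /Ew -!big_split /=; apply: leq_sum => j _.
  case E: (x j) => /=; rewrite ?andbF //.
  rewrite !andbT.
  have j1 : j != 1 by apply/eqP => e; rewrite e x1 in E.
  have jn : j != n by apply/eqP => e; rewrite e xn in E.
  case h1: (2 < j <= n); case h2: ((0 < j) && (j.+2 <= n)); case h3: (0 < j <= n);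
  case h4: (j == 2); case h5: (j == n.-1) => //=; lia.
by rewrite leq_add2l !sum_eq1; case: (2 < n.+3); case: (n.-1 < n.+3).
Qed.

Lemma empty_nb m n C i j : resistant m n C -> in_grid m n i j -> ~~ C i j ->
  [/\ 1 < j, j < n, i < m, C i j.-1 & (C i j.+1 && C i.+1 j)].
Proof.
case=> _ H g e; have := H _ _ g e.
rewrite /blocked /add_house /in_grid.
case/andP => _ /andP[h2 /andP[/andP[_ h3] /andP[/andP[h4 _] rest]]].
move: rest.
rewrite eqxx /= (_ : (j.-1 == j) = false); last by apply/negbTE; lia.
rewrite (_ : (j.+1 == j) = false); last by apply/negbTE; lia.
rewrite (_ : (i.+1 == i) = false); last by apply/negbTE; lia.
rewrite ?andbF /= => /and3P[-> -> ->]; split => //; lia.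
Qed.

Lemma perm_nb m n C i j : resistant m n C -> 0 < i -> i < m -> 1 < j -> j < n ->
  C i j.-1 -> C i j -> C i j.+1 -> ~~ C i.+1 j.
Proof.
case=> [[HP _] _] hi hm hj hn c1 c2 c3.
have g : in_grid m n i j by rewrite /in_grid; lia.
have := HP _ _ g c2; rewrite /blocked /in_grid c1 c3 hj /=.
have -> : (0 < i <= m) = true by lia.
have -> : (0 < j.-1) && (j.-1 <= n) = true by lia.
have -> : (j < n) = true by lia.
have -> : [&& i < m, 0 < j & j <= n] = true by apply/and3P; split; lia.
by [].
Qed.

Lemma step m n C i : resistant m n C -> 0 < i -> i.+2 <= m ->
  Lw n (C i.+1) + Rw n (C i.+1) <= Lw n (C i) + Rw n (C i).
Proof.
move=> R hi hm.
have H1 : forall j, 0 < j <= n -> ~~ C i j -> C i.+1 j.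
  move=> j hj e; have g : in_grid m n i j by rewrite /in_grid; lia.
  by case: (@empty_nb m n C _ _ R g e) => _ _ _ _ /andP[].
have Hb : forall j, 0 < j <= n -> ~~ C i.+1 j ->
    [/\ 1 < j, j < n, C i.+1 j.-1 & C i.+1 j.+1].
  move=> j hj e; have g : in_grid m n i.+1 j by rewrite /in_grid; lia.
  by case: (@empty_nb m n C _ _ R g e) => ? ? _ ? /andP[? _].
have Hbl : forall j, 1 < j -> j < n -> C i j.-1 -> C i j -> C i j.+1 -> ~~ C i.+1 j.
  by move=> j ? ?; apply: (@perm_nb m n C) => //; lia.
rewrite [X in X <= _]addnC.
by apply: leq_add; [exact: (@RL n _ _ H1 Hb Hbl) | exact: (@LR n _ _ H1 Hb Hbl)].
Qed.

Theorem mainTheorem8 (m n : nat) (C : config) (r : nat) :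
  2 <= m -> resistant m n C -> row_count n C m.-1 = r ->
  forall i, 1 <= i <= m - 2 -> row_count n C i <= r.+1.
Proof.
move=> hm R hr i hi.
have chain : forall d i, 0 < i -> i + d = m.-1 ->
    Lw n (C m.-1) + Rw n (C m.-1) <= Lw n (C i) + Rw n (C i).
  elim=> [|d IH] k hk hkd; first by rewrite -hkd addn0.
  apply: (leq_trans (IH k.+1 ltac:(lia) ltac:(lia))).
  apply: (@step m n C k R); lia.
have Q1 := chain (m.-1 - i) i ltac:(lia) ltac:(lia).
have Q2 := QE n (C i).
clear chain.
case: n R hr Q1 Q2 => [|n'] R hr Q1 Q2.
  by rewrite /row_count big_geq.
have x1 : C m.-1 1.
  apply/negPn/negP => e.
  have g : in_grid m n'.+1 m.-1 1 by rewrite /in_grid; apply/andP; split; lia.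
  by case: (@empty_nb m n'.+1 C _ _ R g e).
have xn : C m.-1 n'.+1.
  apply/negPn/negP => e.
  have g : in_grid m n'.+1 m.-1 n'.+1 by rewrite /in_grid; apply/andP; split; lia.
  case: (@empty_nb m n'.+1 C _ _ R g e) => _ h _ _ _; lia.
have Q3 := @EQ n'.+1 (C m.-1) x1 xn.
have P1 := PE n'.+1 (C i).
have P2 := PE n'.+1 (C m.-1).
rewrite !Pw_row in P1 P2.
lia.
Qed.
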